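(* Let $A=\mathbb{k}[x_1,\dots,x_N]$ and let $K_\bullet$ be its Koszul bimodule resolution (defined in the context). Define left $A$-module maps $t_{-1}\colon A\to A\otimes A$ by $t_{-1}(1)=1\otimes 1$, and, for $p\ge 0$, $t_p\colon K_p\to K_{p+1}$ on the left $A$-basis elements $1\otimes(x_{j_1}\wedge\cdots\wedge x_{j_p})\otimes \underline{x}^{\underline{\ell}}$ ($1\le j_1<\cdots<j_p\le N$, $\underline{\ell}\in\mathbb{N}^N$) by $$t_p\big(1\otimes(x_{j_1}\wedge\cdots\wedge x_{j_p})\otimes\underline{x}^{\underline{\ell}}\big)=(-1)^{p+1}\sum_{j_{p+1}=j_p+1}^{N}\ \sum_{r=1}^{\ell_{j_{p+1}}} x_{j_{p+1}}^{\ell_{j_{p+1}}-r}x_{j_{p+1}+1}^{\ell_{j_{p+1}+1}}\cdots x_N^{\ell_N}\otimes(x_{j_1}\wedge\cdots\wedge x_{j_{p+1}})\otimes x_1^{\ell_1}\cdots x_{j_{p+1}-1}^{\ell_{j_{p+1}-1}}x_{j_{p+1}}^{r-1},$$ with the convention $j_0=0$ when $p=0$ (so that $x_{j_1}\wedge\cdots\wedge x_{j_{p+1}}=x_{j_1}$ for $p=0$), and extended left $A$-linearly (the sum is empty, hence $t_p=0$ on such an element, if $j_p=N$). Then $d_0t_{-1}=\mathrm{Id}_A$ and $t_{p-1}d_p+d_{p+1}t_p=\mathrm{Id}_{K_p}$ for all $p\ge 0$; that is, $(t_p)_{p\ge -1}$ is a chain contraction of $K_\bullet$.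
   Context: $\mathbb{k}$ is a field, $V$ is a $\mathbb{k}$-vector space with basis $x_1,\dots,x_N$, and $A=S(V)=\mathbb{k}[x_1,\dots,x_N]$. For $\underline{\ell}=(\ell_1,\dots,\ell_N)\in\mathbb{N}^N$ write $\underline{x}^{\underline{\ell}}=x_1^{\ell_1}\cdots x_N^{\ell_N}$. The Koszul resolution $K_\bullet$ has $K_p=A\otimes\bigwedge^p(V)\otimes A$ ($0\le p\le N$; $K_p=0$ for $p>N$), a free $A$-bimodule with basis $1\otimes(x_{j_1}\wedge\cdots\wedge x_{j_p})\otimes 1$, $1\le j_1<\cdots<j_p\le N$; the augmentation $d_0\colon A\otimes A\to A$ is multiplication, and for $p\ge1$ the $A$-bimodule map $d_p$ is $$d_p(1\otimes(x_{j_1}\wedge\cdots\wedge x_{j_p})\otimes 1)=\sum_{i=1}^p(-1)^{i+1}x_{j_i}\otimes(x_{j_1}\wedge\cdots\widehat{x_{j_i}}\cdots\wedge x_{j_p})\otimes 1-\sum_{i=1}^p(-1)^{i+1}\otimes(x_{j_1}\wedge\cdots\widehat{x_{j_i}}\cdots\wedge x_{j_p})\otimes x_{j_i},$$ where the hat denotes omission. All tensor products are over $\mathbb{k}$. The maps $t_p$ are regarded as maps of complexes of left $A$-modules in the identity $t_{-1}d_0+d_1t_0=\mathrm{Id}$ on $K_0=A\otimes A$. *)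

(* Defs.v *)
From HB Require Import structures.
From mathcomp Require Import all_boot all_order all_algebra.
Set Implicit Arguments. Unset Strict Implicit. Unset Printing Implicit Defensive.
Import GRing.Theory.
Local Open Scope ring_scope.

(* Model: A = k[x_1..x_N] is the free k-vector space on monomials
   (exponent vectors mono := 'I_N -> nat, variables 0-indexed).
   K_p = A (x) /\^p V (x) A is the free k-vector space on triples
   (x^a, e_J, x^b) with J a subset of 'I_N of size p (e_J = ordered wedge).
   An element of a free k-vector space on a basis B is represented by a
   finite formal combination  seq (k * B); its coefficient function
   (coef) identifies it with a finitely supported function B -> k, and two
   representatives denote the same vector iff their coefficient functions
   agree.  k-linear maps are specified on basis vectors and extended
   linearly (lin_ext).  Left A-linearity of the maps is built in by
   defining them on all k-basis vectors x^a (x) e_J (x) x^b accordingly. *)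

Notation monoT N := {ffun 'I_N -> nat}.
Notation KbasisT N := (monoT N * {set 'I_N} * monoT N)%type.
Notation Aelt k N := (seq (k * monoT N)).
Notation Kelt k N := (seq (k * KbasisT N)).

Section Koszul.
Variables (k : fieldType) (N : nat).

Local Notation mono := (monoT N).
Local Notation Kbasis := (KbasisT N).
Local Notation Aelt := (Aelt k N).
Local Notation Kelt := (Kelt k N).

Definition mono_add (a b : mono) : mono := [ffun i => (a i + b i)%N].
Definition mono_unit (j : 'I_N) : mono := [ffun i => if i == j then 1%N else 0%N].
Definition mono1 : mono := [ffun _ => 0%N].


Definition coef (B : eqType) (v : seq (k * B)) (b : B) : k :=
  \sum_(c <- v | c.2 == b) c.1.

Definition lin_ext (B C : Type) (f : B -> seq (k * C)) (v : seq (k * B))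
  : seq (k * C) :=
  flatten [seq [seq (c.1 * e.1, e.2) | e <- f c.2] | c <- v].

Definition Kdeg (p : nat) (v : Kelt) : bool := all (fun c : k * Kbasis => #|c.2.1.2| == p) v.

(* d_0 : A (x) A -> A, multiplication (on K_0, J = set0) *)
Definition d0_basis (b : Kbasis) : Aelt := [:: (1, mono_add b.1.1 b.2)].
Definition d0 : Kelt -> Aelt := lin_ext d0_basis.

Definition tm1_basis (m : mono) : Kelt := [:: (1, (m, set0, mono1))].
Definition tm1 : Aelt -> Kelt := lin_ext tm1_basis.

(* d_p, p >= 1: j = j_i has position i = #{i' in J | i' < j} + 1,
   so (-1)^(i+1) = (-1)^#{i' in J | i' < j}. *)
Definition dK_basis (b : Kbasis) : Kelt :=
  let: (a, J, c) := b in
  flatten [seq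
    let s : k := (-1) ^+ #|[set i in J | (nat_of_ord i < nat_of_ord j)%N]| in
    [:: (s, (mono_add a (mono_unit j), J :\ j, c));
        (- s, (a, J :\ j, mono_add c (mono_unit j)))]
  | j <- enum J].
Definition dK : Kelt -> Kelt := lin_ext dK_basis.

(* t_p on x^a (x) e_J (x) x^l, p = #|J|; j ranges over indices larger
   than all elements of J (i.e. j_{p+1} > j_p, with j_0 = "0"), r in 1..l_j. *)
Definition tK_left (a l : mono) (j : 'I_N) (r : nat) : mono :=
  mono_add a [ffun i => if (nat_of_ord j < nat_of_ord i)%N then l i
                        else if i == j then (l j - r)%N else 0%N].
Definition tK_right (l : mono) (j : 'I_N) (r : nat) : mono :=
  [ffun i => if (nat_of_ord i < nat_of_ord j)%N then l i
             else if i == j then r.-1 else 0%N].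
Definition tK_basis (b : Kbasis) : Kelt :=
  let: (a, J, l) := b in
  let s : k := (-1) ^+ (#|J|.+1) in
  flatten [seq [seq (s, (tK_left a l j r, J :|: [set j], tK_right l j r))
               | r <- iota 1 (l j)]
          | j <- enum 'I_N & [forall i in J, (nat_of_ord i < nat_of_ord j)%N]].
Definition tK : Kelt -> Kelt := lin_ext tK_basis.

End Koszul.

(* Main.v *)
Require Import Defs.
From HB Require Import structures.
From mathcomp Require Import all_boot all_order all_algebra.
From mathcomp Require Import zify ring.
Import GRing.Theory.
Set Implicit Arguments. Unset Strict Implicit. Unset Printing Implicit Defensive.
Local Open Scope ring_scope.

Lemma sum_lin (k : fieldType) (B C : Type) (f : B -> seq (k * C)) (v : seq (k * B))
  (H : C -> k) :
  \sum_(e <- lin_ext f v) e.1 * H e.2 = \sum_(c <- v) c.1 * \sum_(e <- f c.2) e.1 * H e.2.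
Proof.
rewrite /lin_ext big_flatten big_map; apply: eq_bigr => c _.
rewrite big_map mulr_sumr; apply: eq_bigr => e _ /=; by rewrite mulrA.
Qed.

Lemma coefE (k : fieldType) (B : eqType) (v : seq (k * B)) x :
  coef v x = \sum_(e <- v) e.1 * (e.2 == x)%:R.
Proof.
rewrite /coef big_mkcond; apply: eq_bigr => e _.
by case: (e.2 == x); rewrite ?mulr1 ?mulr0.
Qed.

Lemma coef_cat (k : fieldType) (B : eqType) (v w : seq (k * B)) x :
  coef (v ++ w) x = coef v x + coef w x.
Proof. by rewrite /coef big_cat. Qed.
Definition sgn (k : fieldType) {N : nat} (J : {set 'I_N}) (j : 'I_N) : k :=
  (-1) ^+ #|[set i in J | (nat_of_ord i < nat_of_ord j)%N]|.

Definition DKf {k : fieldType} {N : nat} (G : KbasisT N -> k) (b : KbasisT N) : k :=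
  let: (a, J, c) := b in
  \sum_(j in J) sgn k J j * (G (mono_add a (mono_unit j), J :\ j, c)
                            - G (a, J :\ j, mono_add c (mono_unit j))).

Definition Jlt {N : nat} (J : {set 'I_N}) (j : 'I_N) : bool :=
  [forall i in J, (nat_of_ord i < nat_of_ord j)%N].

Definition TKf {k : fieldType} {N : nat} (G : KbasisT N -> k) (b : KbasisT N) : k :=
  let: (a, J, l) := b in
  (-1) ^+ (#|J|.+1) * \sum_(j | Jlt J j) \sum_(r <- iota 1 (l j))
      G (tK_left a l j r, J :|: [set j], tK_right l j r).

Lemma sum_dK (k : fieldType) (N : nat) (G : KbasisT N -> k) b :
  \sum_(e <- dK_basis k b) e.1 * G e.2 = DKf G b.
Proof.
case: b => [[a J] c] /=; rewrite big_flatten big_map big_enum; apply: eq_bigr => j _.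
by rewrite !big_cons big_nil /= addr0 mulNr mulrBr.
Qed.

Lemma sum_tK (k : fieldType) (N : nat) (G : KbasisT N -> k) b :
  \sum_(e <- tK_basis k b) e.1 * G e.2 = TKf G b.
Proof.
case: b => [[a J] l] /=; rewrite big_flatten big_map big_filter.
rewrite mulr_sumr big_enum_cond /=; apply: eq_big => // j _.
by rewrite big_map mulr_sumr.
Qed.

Lemma ordeq (n:nat) (x y : 'I_n) : (x == y) = (x == y :> nat). Proof. by []. Qed.

Definition hi {N : nat} (l : monoT N) (n : nat) : monoT N := [ffun i : 'I_N => if (n <= i)%N then l i else 0%N].
Definition lo {N : nat} (l : monoT N) (n : nat) : monoT N := [ffun i : 'I_N => if (i < n)%N then l i else 0%N].

Ltac mt := apply/ffunP => x; have := ltn_ord x; rewrite /tK_left /tK_right /hi /lo /mono_add /mono_unit !ffunE /= ?ffunE;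
  repeat (case: ifP => /= ?);
  repeat match goal with H : is_true (?x == ?y) |- _ => let H2 := fresh "H" in move/eqP: H => H2; subst end;
  repeat match goal with H : (?x == ?y) = false |- _ =>
     let E := fresh "E" in let H2 := fresh "H" in move/negbT/eqP: H => H2;
     have E : nat_of_ord x <> nat_of_ord y by (move=> E; apply: H2; apply: val_inj) ; clear H2 end;
  lia.

Lemma M1 N (a l : monoT N) j r : (0 < r <= l j)%N -> mono_add (tK_left a l j r) (mono_unit j) = tK_left a l j r.-1.
Proof. move=> H. mt. Qed.
Lemma M2 N (l : monoT N) j r : (0 < r)%N -> mono_add (tK_right l j r) (mono_unit j) = tK_right l j r.+1.
Proof. move=> H. mt. Qed.
Lemma M3 N (a l : monoT N) j : tK_left a l j 0 = mono_add a (hi l j).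
Proof. mt. Qed.
Lemma M4 N (l : monoT N) j : tK_right l j 1 = lo l j.
Proof. mt. Qed.
Lemma M5 N (a l : monoT N) j : tK_left a l j (l j) = mono_add a (hi l j.+1).
Proof. mt. Qed.
Lemma M6 N (l : monoT N) j : tK_right l j (l j).+1 = lo l j.+1.
Proof. mt. Qed.
Lemma M7 N (a l : monoT N) : mono_add a (hi l N) = a.
Proof. mt. Qed.
Lemma M7' N (l : monoT N) : lo l N = l.
Proof. mt. Qed.
Lemma M8 N (a l : monoT N) i j r : tK_left (mono_add a (mono_unit i)) l j r = mono_add (tK_left a l j r) (mono_unit i).
Proof. mt. Qed.
Lemma M9 N (a l : monoT N) (i j : 'I_N) r : (i < j)%N -> tK_left a (mono_add l (mono_unit i)) j r = tK_left a l j r.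
Proof. move=> H. mt. Qed.
Lemma M10 N (l : monoT N) (i j : 'I_N) r : (i < j)%N -> tK_right (mono_add l (mono_unit i)) j r = mono_add (tK_right l j r) (mono_unit i).
Proof. move=> H. mt. Qed.
Lemma M11 N (l : monoT N) (i j : 'I_N) : i != j -> (mono_add l (mono_unit i)) j = l j.
Proof. rewrite /mono_add /mono_unit !ffunE eq_sym => /negbTE ->; lia. Qed.
Lemma M11' N (l : monoT N) (i : 'I_N) : (mono_add l (mono_unit i)) i = (l i).+1.
Proof. rewrite /mono_add /mono_unit !ffunE eqxx; lia. Qed.
Lemma M12 N (a l : monoT N) (i j : 'I_N) r : (j < i)%N -> tK_left a (mono_add l (mono_unit i)) j r = tK_left (mono_add a (mono_unit i)) l j r.
Proof. move=> H. mt. Qed.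
Lemma M13 N (l : monoT N) (i j : 'I_N) r : (j <= i)%N -> tK_right (mono_add l (mono_unit i)) j r = tK_right l j r.
Proof. move=> H. mt. Qed.
Lemma M14 N (a l : monoT N) (i : 'I_N) r : (r <= l i)%N -> tK_left a (mono_add l (mono_unit i)) i r = tK_left (mono_add a (mono_unit i)) l i r.
Proof. move=> H. mt. Qed.
Lemma M16 N (a l : monoT N) (i : 'I_N) : tK_left a (mono_add l (mono_unit i)) i (l i).+1 = mono_add a (hi l i.+1).
Proof. mt. Qed.

Local Open Scope ring_scope.

Definition mJ {N : nat} (J : {set 'I_N}) : nat := (\max_(i in J) (nat_of_ord i).+1)%N.

Lemma JltE N (J : {set 'I_N}) j : Jlt J j = (mJ J <= j)%N.
Proof.
apply/forallP/bigmax_leqP => H i; first by move=> iJ; have := H i; rewrite iJ.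
by apply/implyP => iJ; exact: H.
Qed.

Lemma mJ_le N (J : {set 'I_N}) : (mJ J <= N)%N.
Proof. by apply/bigmax_leqP => i _; exact: ltn_ord. Qed.

Lemma S2 N (J : {set 'I_N}) i j : Jlt J j -> i \in J -> (i < j)%N.
Proof. by move=> /forallP H iJ; have := H i; rewrite iJ. Qed.

Lemma S1 N (J : {set 'I_N}) j : Jlt J j -> j \notin J.
Proof. by move=> H; apply/negP => /(S2 H); rewrite ltnn. Qed.

Lemma S3 N (J : {set 'I_N}) j : Jlt J j -> (J :|: [set j]) :\ j = J.
Proof.
move=> H; apply/setP => x; rewrite !inE; case: (eqVneq x j) => [->|] /=.
  by rewrite (negbTE (S1 H)).
by rewrite orbF.
Qed.

Lemma S4 N (J : {set 'I_N}) i j : i != j -> (J :|: [set j]) :\ i = J :\ i :|: [set j].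
Proof.
move=> H; apply/setP => x; rewrite !inE; case: (eqVneq x j) => [->|] /=.
  by rewrite eq_sym H orbT.
by rewrite !orbF.
Qed.

Lemma S5 N (J : {set 'I_N}) j : Jlt J j ->
  [set i' in J :|: [set j] | (nat_of_ord i' < nat_of_ord j)%N] = J.
Proof.
move=> H; apply/setP => x; rewrite !inE; case: (eqVneq x j) => [->|] /=.
  by rewrite ltnn andbF (negbTE (S1 H)).
rewrite orbF; case xJ: (x \in J) => /=; last by []. by move=> _; rewrite (S2 H xJ).
Qed.

Lemma S6 N (J : {set 'I_N}) i j : Jlt J j -> i \in J ->
  [set i' in J :|: [set j] | (nat_of_ord i' < nat_of_ord i)%N] = [set i' in J | (nat_of_ord i' < nat_of_ord i)%N].
Proof.
move=> H iJ; apply/setP => x; rewrite !inE; case: (eqVneq x j) => [->|] /=.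
  rewrite (negbTE (S1 H)) orbT /=; apply/negbTE; rewrite -leqNgt; apply: ltnW; exact: S2 H iJ.
by rewrite orbF.
Qed.

Lemma tele_iota (k : fieldType) (f : nat -> k) n :
  \sum_(r <- iota 1 n) (f r.-1 - f r) = f 0%N - f n.
Proof.
elim: n => [|n IH]; first by rewrite big_nil subrr.
have -> : iota 1 n.+1 = iota 1 n ++ [:: n.+1] by have := iotaD 1 n 1; rewrite addn1 add1n.
by rewrite big_cat big_seq1 IH /= addrA subrK.
Qed.

Lemma DKf_ext (k : fieldType) N (G : KbasisT N -> k) A J R j : Jlt J j ->
  DKf G (A, J :|: [set j], R) =
    (-1) ^+ #|J| * (G (mono_add A (mono_unit j), J, R) - G (A, J, mono_add R (mono_unit j)))
  + \sum_(i in J) sgn k J i * (G (mono_add A (mono_unit i), J :\ i :|: [set j], R)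
                             - G (A, J :\ i :|: [set j], mono_add R (mono_unit i))).
Proof.
move=> H; rewrite /DKf (bigD1 j) /=; last by rewrite !inE eqxx orbT.
rewrite /sgn S5 // S3 //; congr (_ + _).
apply: eq_big => i.
  rewrite !inE; case: (eqVneq i j) => [->|] /=; first by rewrite (negbTE (S1 H)).
  by rewrite orbF andbT.
move=> /andP [iJ' ij]; have iJ : i \in J by move: iJ'; rewrite !inE (negbTE ij) orbF.
by rewrite S6 // S4.
Qed.

Definition gf {k : fieldType} {N : nat} (G : KbasisT N -> k) (a : monoT N) (J : {set 'I_N}) (l : monoT N) (n : nat) : k :=
  G (mono_add a (hi l n), J, lo l n).

Definition Qf {k : fieldType} {N : nat} (G : KbasisT N -> k) (a : monoT N) (J : {set 'I_N}) (l : monoT N) : k :=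
  \sum_(j | Jlt J j) \sum_(r <- iota 1 (l j)) \sum_(i in J) sgn k J i *
    (G (mono_add (tK_left a l j r) (mono_unit i), J :\ i :|: [set j], tK_right l j r)
   - G (tK_left a l j r, J :\ i :|: [set j], mono_add (tK_right l j r) (mono_unit i))).

Lemma inner_tele (k : fieldType) N (G : KbasisT N -> k) (a : monoT N) (J : {set 'I_N}) (l : monoT N) (j : 'I_N) :
  \sum_(r <- iota 1 (l j)) (G (mono_add (tK_left a l j r) (mono_unit j), J, tK_right l j r)
     - G (tK_left a l j r, J, mono_add (tK_right l j r) (mono_unit j)))
  = gf G a J l j - gf G a J l j.+1.
Proof.
rewrite (eq_big_seq (fun r => (fun r => G (tK_left a l j r, J, tK_right l j r.+1)) r.-1
                 - (fun r => G (tK_left a l j r, J, tK_right l j r.+1)) r)).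
  by rewrite tele_iota /= M3 M4 M5 M6.
move=> r; rewrite mem_iota => /andP [r1 r2] /=.
have r0 : (0 < r)%N by [].
rewrite M1; last by rewrite r0 /=; rewrite add1n ltnS in r2.
by rewrite M2 // prednK.
Qed.

Lemma TD (k : fieldType) N (G : KbasisT N -> k) (a : monoT N) (J : {set 'I_N}) (l : monoT N) :
  TKf (DKf G) (a, J, l) = G (a, J, l) - gf G a J l (mJ J) + (-1) ^+ (#|J|.+1) * Qf G a J l.
Proof.
rewrite /TKf /Qf.
rewrite (eq_bigr (fun j : 'I_N => (-1) ^+ #|J| * (gf G a J l j - gf G a J l j.+1) +
   \sum_(r <- iota 1 (l j)) \sum_(i in J) sgn k J i *
    (G (mono_add (tK_left a l j r) (mono_unit i), J :\ i :|: [set j], tK_right l j r)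
   - G (tK_left a l j r, J :\ i :|: [set j], mono_add (tK_right l j r) (mono_unit i))))); last first.
  move=> j H; rewrite -inner_tele mulr_sumr -big_split /=; apply: eq_bigr => r _.
  exact: DKf_ext.
rewrite big_split /= mulrDr; congr (_ + _).
rewrite -mulr_sumr exprS mulN1r mulNr signrMK.
rewrite (eq_bigl (fun j : 'I_N => true && (mJ J <= j)%N)); last by move=> j; rewrite JltE.
rewrite -(@big_geq_mkord _ _ _ (mJ J) N xpredT (fun j => gf G a J l j - gf G a J l j.+1)).
rewrite -sumrN (eq_bigr (fun i => gf G a J l i.+1 - gf G a J l i)); last by move=> i _; rewrite opprB.
rewrite telescope_sumr ?mJ_le //.
by rewrite /gf M7 M7'.
Qed.

Lemma Jlt_sub N (J : {set 'I_N}) i j : Jlt J j -> Jlt (J :\ i) j.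
Proof.
move=> /forallP H; apply/forallP => x; apply/implyP; rewrite !inE => /andP [_ xJ].
by have := H x; rewrite xJ.
Qed.

Lemma le_i N (J : {set 'I_N}) (i j : 'I_N) : i \in J -> Jlt (J :\ i) j -> ~~ Jlt J j -> (j <= i)%N.
Proof.
move=> iJ /forallP H; rewrite /Jlt negb_forall => /existsP [x].
rewrite negb_imply => /andP [xJ xj].
case: (eqVneq x i) => [E|xi]; first by move: xj; rewrite E -leqNgt.
by have := H x; rewrite !inE xi xJ /= (negbTE xj).
Qed.

Definition Xf {k : fieldType} {N : nat} (G : KbasisT N -> k) (a : monoT N) (J : {set 'I_N}) (l : monoT N) (i j : 'I_N) : k :=
  \sum_(r <- iota 1 (l j))
    (G (mono_add (tK_left a l j r) (mono_unit i), J :\ i :|: [set j], tK_right l j r)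
   - G (tK_left a l j r, J :\ i :|: [set j], mono_add (tK_right l j r) (mono_unit i))).

Lemma TKdiff (k : fieldType) N (G : KbasisT N -> k) (a : monoT N) (J : {set 'I_N}) (l : monoT N) (i : 'I_N) :
  i \in J ->
  TKf G (mono_add a (mono_unit i), J :\ i, l) - TKf G (a, J :\ i, mono_add l (mono_unit i))
  = (-1) ^+ #|J| * (\sum_(j | Jlt J j) Xf G a J l i j
                    - (if Jlt (J :\ i) i then gf G a J l i.+1 else 0)).
Proof.
move=> iJ; rewrite /TKf.
have -> : #|J :\ i|.+1 = #|J| by rewrite [in RHS](cardsD1 i) iJ.
rewrite -mulrBr; congr (_ * _).
rewrite -sumrB (bigID (Jlt J)) /=; congr (_ + _).
  apply: eq_big => j; first by case H: (Jlt J j); rewrite ?andbT ?andbF // Jlt_sub.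
  move=> /andP [_ H]; have ij := S2 H iJ.
  rewrite /Xf M11; last by apply/negP => /eqP E; move: ij; rewrite E ltnn.
  rewrite -sumrB.
  apply: eq_bigr => r _; by rewrite M8 M9 // M10.
have vanish : forall j : 'I_N, (j < i)%N ->
  \sum_(r <- iota 1 (l j)) G (tK_left (mono_add a (mono_unit i)) l j r, J :\ i :|: [set j], tK_right l j r) -
  \sum_(r <- iota 1 (mono_add l (mono_unit i) j))
     G (tK_left a (mono_add l (mono_unit i)) j r, J :\ i :|: [set j], tK_right (mono_add l (mono_unit i)) j r) = 0.
  move=> j ji; rewrite M11; last by apply/negP => /eqP E; move: ji; rewrite E ltnn.
  rewrite -sumrB big1 // => r _; by rewrite M12 // M13 ?subrr // ltnW.
case c: (Jlt (J :\ i) i).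
  rewrite (bigD1 i) /=; last by rewrite c /Jlt negb_forall; apply/existsP; exists i; rewrite iJ ltnn.
  rewrite [X in _ + X]big1 ?addr0; last first.
    move=> j /andP [/andP [H1 H2] ji]; apply: vanish.
    by rewrite ltn_neqAle (le_i iJ H1 H2) andbT.
  rewrite M11' [J :\ i :|: _]setUC setD1K //.
  have -> : iota 1 (l i).+1 = iota 1 (l i) ++ [:: (l i).+1] by have := iotaD 1 (l i) 1; rewrite addn1 add1n.
  rewrite big_cat big_seq1 /= opprD addrA M16 M13 // M6.
  rewrite [X in _ - X - _](eq_big_seq (fun r => G (tK_left (mono_add a (mono_unit i)) l i r, J, tK_right l i r))).
    by rewrite subrr sub0r.
  move=> r; rewrite mem_iota add1n ltnS => /andP [_ H]; by rewrite M14 // M13.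
rewrite oppr0 big1 // => j /andP [H1 H2].
apply: vanish; rewrite ltn_neqAle (le_i iJ H1 H2) andbT.
by apply/negP => /eqP/val_inj E; move: H1; rewrite E c.
Qed.

Lemma partA (k : fieldType) N (G : KbasisT N -> k) (a : monoT N) (J : {set 'I_N}) (l : monoT N) :
  \sum_(i in J) sgn k J i * \sum_(j | Jlt J j) Xf G a J l i j = Qf G a J l.
Proof.
rewrite /Qf (eq_bigr (fun i => \sum_(j | Jlt J j) sgn k J i * Xf G a J l i j)); last by move=> i _; rewrite mulr_sumr.
rewrite exchange_big /=; apply: eq_bigr => j _.
rewrite /Xf (eq_bigr (fun i => \sum_(r <- iota 1 (l j)) sgn k J i *
    (G (mono_add (tK_left a l j r) (mono_unit i), J :\ i :|: [set j], tK_right l j r)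
   - G (tK_left a l j r, J :\ i :|: [set j], mono_add (tK_right l j r) (mono_unit i))))); last by move=> i _; rewrite mulr_sumr.
by rewrite exchange_big.
Qed.

Lemma partB (k : fieldType) N (G : KbasisT N -> k) (a : monoT N) (J : {set 'I_N}) (l : monoT N) :
  (0 < #|J|)%N ->
  \sum_(i in J) sgn k J i * (if Jlt (J :\ i) i then gf G a J l i.+1 else 0)
  = - ((-1) ^+ #|J| * gf G a J l (mJ J)).
Proof.
move=> J0; have [i0 i0J Hm] := eq_bigmax_cond (fun i : 'I_N => (nat_of_ord i).+1) J0.
rewrite -/(mJ J) in Hm.
have ltm : forall x, x \in J -> (x < mJ J)%N.
  by move=> x xJ; exact: leq_bigmax_cond.
have c0 : Jlt (J :\ i0) i0.
  apply/forallP => x; apply/implyP; rewrite !inE => /andP [xi xJ].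
  have := ltm x xJ; rewrite Hm ltnS leq_eqVlt => /orP [/eqP/val_inj E|//].
  by move: xi; rewrite E eqxx.
rewrite (bigD1 i0) //= big1 ?addr0; last first.
  move=> i /andP [iJ ii0]; case c: (Jlt (J :\ i) i); last by rewrite mulr0.
  have := S2 c; move/(_ i0); rewrite !inE eq_sym ii0 i0J => /(_ isT) i0i.
  have := ltm i iJ; rewrite Hm ltnS leqNgt i0i //.
rewrite c0 Hm /sgn.
have -> : [set i' in J | (nat_of_ord i' < nat_of_ord i0)%N] = J :\ i0.
  apply/setP => x; rewrite !inE; case xJ: (x \in J); rewrite ?andbF ?andbT //=.
  have := ltm x xJ; rewrite Hm ltnS leq_eqVlt.
  case: (eqVneq x i0) => [->|xi]; first by rewrite ltnn.
  by move=> /orP [/eqP/val_inj E|->//]; rewrite E eqxx in xi.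
rewrite [in RHS](cardsD1 i0 J) i0J add1n exprS mulN1r mulNr opprK //.
Qed.

Lemma DT (k : fieldType) N (G : KbasisT N -> k) (a : monoT N) (J : {set 'I_N}) (l : monoT N) :
  (0 < #|J|)%N ->
  DKf (TKf G) (a, J, l) = gf G a J l (mJ J) - (-1) ^+ (#|J|.+1) * Qf G a J l.
Proof.
move=> J0; rewrite /DKf.
rewrite (eq_bigr (fun i => (-1)^+#|J| * (sgn k J i * \sum_(j | Jlt J j) Xf G a J l i j)
   - (-1)^+#|J| * (sgn k J i * (if Jlt (J :\ i) i then gf G a J l i.+1 else 0)))); last first.
  by move=> i iJ; rewrite TKdiff // mulrCA !mulrBr.
rewrite sumrB -!mulr_sumr partA partB //.
by rewrite mulrN opprK signrMK exprS mulN1r mulNr opprK addrC.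
Qed.

Lemma basis_pos (k : fieldType) N (G : KbasisT N -> k) (b : KbasisT N) :
  (0 < #|b.1.2|)%N -> DKf (TKf G) b + TKf (DKf G) b = G b.
Proof.
case: b => [[a J] l] J0; rewrite DT // TD.
ring.
Qed.

Lemma basis_zero (k : fieldType) N (G : KbasisT N -> k) (b : KbasisT N) :
  #|b.1.2| = 0%N -> G (mono_add b.1.1 b.2, set0, mono1 N) + TKf (DKf G) b = G b.
Proof.
case: b => [[a J] l] J0; rewrite TD.
have J00 : J = set0 by apply/eqP; rewrite -cards_eq0 J0.
subst J; rewrite /Qf /gf /=.
have -> : mJ (set0 : {set 'I_N}) = 0%N by rewrite /mJ big_set0.
rewrite (eq_bigr (fun _ => 0)); last by move=> j _; rewrite big1 // => r _; rewrite big_set0.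
rewrite big1 // mulr0 addr0.
have -> : hi l 0 = l by apply/ffunP => x; rewrite ffunE.
have -> : lo l 0 = mono1 N by apply/ffunP => x; rewrite !ffunE.
by rewrite addrC subrK.
Qed.

Lemma coef_lin (k : fieldType) (B C : eqType) (f : B -> seq (k * C)) (v : seq (k * B)) x :
  coef (lin_ext f v) x = \sum_(c <- v) c.1 * coef (f c.2) x.
Proof.
rewrite coefE (sum_lin f v (fun y => (y == x)%:R)); apply: eq_bigr => c _; by rewrite coefE.
Qed.

Lemma coef2 (k : fieldType) (B C D : eqType) (f : B -> seq (k * C)) (g : C -> seq (k * D)) v x :
  coef (lin_ext g (lin_ext f v)) x = \sum_(c <- v) c.1 * \sum_(e <- f c.2) e.1 * coef (g e.2) x.
Proof. by rewrite coef_lin (sum_lin f v (fun y => coef (g y) x)). Qed.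

Lemma coef_dK (k : fieldType) N (b x : KbasisT N) :
  coef (dK_basis k b) x = DKf (fun y => (y == x)%:R) b.
Proof. by rewrite coefE (sum_dK (fun y => (y == x)%:R)). Qed.

Lemma coef_tK (k : fieldType) N (b x : KbasisT N) :
  coef (tK_basis k b) x = TKf (fun y => (y == x)%:R) b.
Proof. by rewrite coefE (sum_tK (fun y => (y == x)%:R)). Qed.

Theorem mainTheorem2 (k : fieldType) (N : nat) :
  (* d_0 t_{-1} = Id_A *)
  (forall v : Aelt k N, coef (d0 (tm1 v)) =1 coef v) /\
  (* t_{p-1} d_p + d_{p+1} t_p = Id_{K_p} for all p >= 0 *)
  (forall (p : nat) (v : Kelt k N), Kdeg p v ->
     coef ((if p is 0 then tm1 (d0 v) else tK (dK v)) ++ dK (tK v)) =1 coef v).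
Proof.
split.
  move=> v x; rewrite /d0 /tm1 coef2 [in RHS]coefE; apply: eq_bigr => c _.
  rewrite big_cons big_nil /= addr0 mul1r /coef big_cons big_nil /= addr0.
  have -> : mono_add c.2 (mono1 N) = c.2 by apply/ffunP => y; rewrite !ffunE addn0.
  by case: (c.2 == x); rewrite ?mulr1 ?mulr0.
move=> p v Hv x; rewrite coef_cat /dK /tK coef2 [in RHS]coefE.
rewrite (eq_bigr (fun c => c.1 * TKf (DKf (fun y => (y == x)%:R)) c.2)); last first.
  by move=> c _; rewrite -sum_tK; congr (_ * _); apply: eq_bigr => e _; rewrite coef_dK.
case: p Hv => [|p] Hv.
  rewrite /tm1 /d0 coef2 -big_split /=; apply: eq_big_seq => c cv.
  have := allP Hv c cv => /eqP /= H0.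
  rewrite -mulrDr big_cons big_nil /= addr0 mul1r /coef big_cons big_nil /= addr0.
  rewrite -(basis_zero (fun y => (y == x)%:R) H0) /=.
  by case: (_ == x); rewrite ?mulr1 ?mulr0.
rewrite coef2 -big_split /=; apply: eq_big_seq => c cv.
have := allP Hv c cv => /eqP /= H0.
rewrite -mulrDr; congr (_ * _).
rewrite -(basis_pos (fun y => (y == x)%:R) (b := c.2)); last by rewrite H0.
congr (_ + _); rewrite -sum_dK; apply: eq_bigr => e _; by rewrite coef_tK.
Qed.
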